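(* Let $q\in\mathrm{prob}(\{0,1\}^2)$. The set $B_\le:=\{(\pi_1,\chi^{(1)}_{1|1},\chi^{(2)}_{1|1}):(\pi,\chi)\in\Theta_2,\ \mu(\pi,\chi)=q,\ \chi^{(1)}_{0|0}\le\chi^{(2)}_{0|0}\}$ is nonempty and equals the set of all $(\mathrm{Pr},\mathrm{Se}_1,\mathrm{Se}_2)\in[0,1]^3$ satisfying $-q_{00}\le\mathrm{Pr}(\mathrm{Se}_1+\mathrm{Se}_2-1)\le q_{11}$, $\mathrm{Pr}-q_{0+}\le\mathrm{Pr}\,\mathrm{Se}_1\le q_{1+}$, $\mathrm{Pr}-q_{+0}\le\mathrm{Pr}\,\mathrm{Se}_2\le q_{+1}$, and $q_{01}-q_{10}\le\mathrm{Pr}(\mathrm{Se}_2-\mathrm{Se}_1)\le q_{01}$.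
   Context: A subscript $+$ denotes summation over the replaced index. $\mathrm{prob}(\mathcal{X})$ is the set of probability densities on a finite set $\mathcal{X}$; $\mathrm{markov}(\mathcal{X},\mathcal{Y})$ the set of maps $(x,y)\mapsto p_{y|x}$ with $p_{\cdot|x}\in\mathrm{prob}(\mathcal{Y})$. $\Theta_2:=\mathrm{prob}(\{0,1\})\times\mathrm{markov}(\{0,1\},\{0,1\}^2)$, $\mu(\pi,\chi)_j:=\sum_{i=0}^1\pi_i\chi_{j|i}$ for $j\in\{0,1\}^2$, $\chi^{(1)}_{\iota|i}:=\chi_{\iota0|i}+\chi_{\iota1|i}$, $\chi^{(2)}_{\iota|i}:=\chi_{0\iota|i}+\chi_{1\iota|i}$. *)

(* Defs.v *)
From HB Require Import structures.
From mathcomp Require Import all_boot all_order all_algebra.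
From mathcomp Require Import reals.
Set Implicit Arguments. Unset Strict Implicit. Unset Printing Implicit Defensive.
Import Order.TTheory GRing.Theory Num.Theory.
Local Open Scope ring_scope.

(* {0,1} is encoded as bool (false = 0, true = 1); {0,1}^2 as bool * bool,
   with j = (j1, j2). *)

Definition is_prob (R : realType) (X : finType) (p : X -> R) : Prop :=
  (forall x, 0 <= p x) /\ \sum_(x : X) p x = 1.

(* markov(X,Y): maps (x,y) |-> p_{y|x}; here chi x y = chi_{y|x} *)
Definition is_markov (R : realType) (X Y : finType) (chi : X -> Y -> R) : Prop :=
  forall x, is_prob (chi x).

Definition mu (R : realType) (pi : bool -> R) (chi : bool -> bool * bool -> R)
  (j : bool * bool) : R := \sum_(i : bool) pi i * chi i j.

Definition chi1 (R : realType) (chi : bool -> bool * bool -> R) (iota i : bool) : R :=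
  chi i (iota, false) + chi i (iota, true).

Definition chi2 (R : realType) (chi : bool -> bool * bool -> R) (iota i : bool) : R :=
  chi i (false, iota) + chi i (true, iota).

Definition B_le (R : realType) (q : bool * bool -> R) (Pr Se1 Se2 : R) : Prop :=
  exists (pi : bool -> R) (chi : bool -> bool * bool -> R),
    [/\ is_prob pi, is_markov chi, (forall j, mu pi chi j = q j),
        chi1 chi false false <= chi2 chi false false &
        (Pr, Se1, Se2) = (pi true, chi1 chi true true, chi2 chi true true)].

Definition qrow (R : realType) (q : bool * bool -> R) (a : bool) : R :=
  q (a, false) + q (a, true).
Definition qcol (R : realType) (q : bool * bool -> R) (b : bool) : R :=
  q (false, b) + q (true, b).

Definition B_ineq (R : realType) (q : bool * bool -> R) (Pr Se1 Se2 : R) : Prop :=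
  [/\ 0 <= Pr <= 1, 0 <= Se1 <= 1 & 0 <= Se2 <= 1] /\
  [/\ - q (false, false) <= Pr * (Se1 + Se2 - 1) <= q (true, true),
      Pr - qrow q false <= Pr * Se1 <= qrow q true,
      Pr - qcol q false <= Pr * Se2 <= qcol q true &
      q (false, true) - q (true, false) <= Pr * (Se2 - Se1) <= q (false, true)].

(* Main.v *)
Require Import Defs.
From HB Require Import structures.
From mathcomp Require Import all_boot all_order all_algebra.
From mathcomp Require Import reals.
From mathcomp Require Import ring lra.
Import Order.TTheory GRing.Theory Num.Theory.
Local Open Scope ring_scope.

Lemma sum_bb (R : realType) (f : bool * bool -> R) :
  \sum_(x : bool * bool) f x = f (false,false) + f (false,true) + f (true,false) + f (true,true).
Proof.
rewrite (eq_bigr (fun p => f (p.1, p.2))); last by case.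
rewrite -(pair_bigA _ (fun a b => f (a, b))) /= !big_bool /=; ring.
Qed.

Lemma between (R : realType) (l1 l2 l3 l4 u1 u2 u3 u4 : R) :
  (forall l, l \in [:: l1; l2; l3; l4] -> forall u, u \in [:: u1; u2; u3; u4] -> l <= u) ->
  exists t, [/\ l1 <= t, l2 <= t, l3 <= t & l4 <= t] /\ [/\ t <= u1, t <= u2, t <= u3 & t <= u4].
Proof.
move=> H; exists (Num.max (Num.max l1 l2) (Num.max l3 l4)).
rewrite !ge_max !le_max !lexx !orbT /=.
split; first by split.
split; rewrite ?H ?inE ?eqxx ?orbT //.
Qed.

Definition mk4 {R : Type} (a b c d : R) (j : bool * bool) : R :=
  match j with
  | (false, false) => a | (false, true) => b
  | (true, false) => c | (true, true) => d end.

Lemma is_prob_mk4 (R : realType) (a b c d : R) :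
  0 <= a -> 0 <= b -> 0 <= c -> 0 <= d -> a + b + c + d = 1 -> is_prob (mk4 a b c d).
Proof. move=> ha hb hc hd hs; split; [by move=> [[] []]|by rewrite sum_bb]. Qed.

Lemma is_prob_bool (R : realType) (P : R) : 0 <= P <= 1 ->
  is_prob (fun i : bool => if i then P else 1 - P).
Proof.
move=> /andP[h0 h1]; split; first by case => //; rewrite subr_ge0.
by rewrite big_bool /=; ring.
Qed.

Lemma fwd (R : realType) (q : bool * bool -> R) Pr Se1 Se2 :
  B_le q Pr Se1 Se2 -> B_ineq q Pr Se1 Se2.
Proof.
case=> pi [chi [[hp0 hps] hchi hmu hle [-> -> ->]]].
rewrite big_bool in hps.
have {}hps : pi true + pi false = 1 := hps.
have [ha0 has] := hchi true; have [hb0 hbs] := hchi false.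
rewrite sum_bb in has; rewrite sum_bb in hbs.
have hm : forall j, pi true * chi true j + pi false * chi false j = q j.
  by move=> j; rewrite -(hmu j) /mu big_bool.
have m1 := hm (false,false); have m2 := hm (false,true).
have m3 := hm (true,false); have m4 := hm (true,true).
have hs : pi true * (chi true (false,false) + chi true (false,true) + chi true (true,false)
   + chi true (true,true)) = pi true * 1 by rewrite has.
have pt : 0 <= pi true := hp0 true.
have pf : 0 <= pi false := hp0 false.
have hx := fun j => mulr_ge0 pt (ha0 j).
have hy := fun j => mulr_ge0 pf (hb0 j).
have x1 := hx (false,false); have x2 := hx (false,true); have x3 := hx (true,false); have x4 := hx (true,true).
have y1 := hy (false,false); have y2 := hy (false,true); have y3 := hy (true,false); have y4 := hy (true,true).
have a1 := ha0 (false,false); have a2 := ha0 (false,true); have a3 := ha0 (true,false); have a4 := ha0 (true,true).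
have hl : pi false * chi false (false, true) <= pi false * chi false (true, false).
  apply: ler_wpM2l => //; move: hle; rewrite /chi1 /chi2; lra.
move: hps hs m1 m2 m3 m4 pt pf x1 x2 x3 x4 y1 y2 y3 y4 a1 a2 a3 a4 hl has.
rewrite /B_ineq /qrow /qcol /chi1 /chi2 => *.
split; split; try (apply/andP; split); lra.
Qed.

Theorem lemma8 (R : realType) (q : bool * bool -> R) (hq : is_prob q) :
  (exists Pr Se1 Se2 : R, B_le q Pr Se1 Se2) /\
  (forall Pr Se1 Se2 : R, B_le q Pr Se1 Se2 <-> B_ineq q Pr Se1 Se2).
Proof.
have [hq0 hqs] := hq; rewrite sum_bb in hqs.
split.
  exists 1, (q (true,false) + q (true,true)), (q (false,true) + q (true,true)).
  exists (fun i : bool => if i then 1 else 0), (fun i : bool => if i then q else mk4 1 0 0 0).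
  split.
  - by split; [case; rewrite ?ler01 ?lexx|rewrite big_bool /=; ring].
  - by case => //; apply: is_prob_mk4; rewrite ?lexx ?ler01 //; ring.
  - by move=> j; rewrite /mu big_bool /=; ring.
  - by rewrite /chi1 /chi2 /= lexx.
  - by [].
move=> Pr Se1 Se2; split; first exact: fwd.
rewrite /B_ineq /qrow /qcol.
move=> [[/andP[hP0 hP1] /andP[hs10 hs11] /andP[hs20 hs21]]
        [/andP[i1 i2] /andP[i3 i4] /andP[i5 i6] /andP[i7 i8]]].
have q00 := hq0 (false,false); have q01 := hq0 (false,true).
have q10 := hq0 (true,false); have q11 := hq0 (true,true).
have [hPe|nP0] := eqVneq Pr 0.
  subst Pr.
  exists (fun i : bool => if i then 0 else 1),
    (fun i : bool => if i then mk4 ((1 - Se1) * (1 - Se2)) ((1 - Se1) * Se2) (Se1 * (1 - Se2)) (Se1 * Se2) else q).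
  split.
  - by split; [case; rewrite ?ler01 ?lexx|rewrite big_bool /=; ring].
  - case => //; apply: is_prob_mk4; rewrite ?mulr_ge0 ?subr_ge0 //; ring.
  - by move=> j; rewrite /mu big_bool /=; ring.
  - rewrite /chi1 /chi2 /=; lra.
  - by congr (_, _, _); rewrite /chi1 /chi2 /=; ring.
have [hPe|nP1] := eqVneq Pr 1.
  subst Pr.
  exists (fun i : bool => if i then 1 else 0), (fun i : bool => if i then q else mk4 1 0 0 0).
  split.
  - by split; [case; rewrite ?ler01 ?lexx|rewrite big_bool /=; ring].
  - by case => //; apply: is_prob_mk4; rewrite ?lexx ?ler01 //; ring.
  - by move=> j; rewrite /mu big_bool /=; ring.
  - by rewrite /chi1 /chi2 /=.
  - congr (_, _, _); rewrite /chi1 /chi2 /=; lra.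
set S1 := Pr * Se1; set S2 := Pr * Se2.
have hS1 : S1 = Pr * Se1 by []; have hS2 : S2 = Pr * Se2 by [].
have hS10 : 0 <= S1 by rewrite mulr_ge0.
have hS20 : 0 <= S2 by rewrite mulr_ge0.
have hS1P : S1 <= Pr by rewrite -[leRHS]mulr1 ler_wpM2l.
have hS2P : S2 <= Pr by rewrite -[leRHS]mulr1 ler_wpM2l.
have [t [[l1 l2 l3 l4] [u1 u2 u3 u4]]] :=
  @between R 0 (S1 - q (true,false)) (S2 - q (false,true))
    (S1 + S2 - Pr) (q (true,true)) S1 S2
    (q (false,false) + S1 + S2 - Pr)
    ltac:(move=> l; rewrite !inE => /or4P [] /eqP -> u;
          rewrite !inE => /or4P [] /eqP ->; lra).
have Pn : Pr != 0 by [].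
have P1n : 1 - Pr != 0 by rewrite subr_eq0 eq_sym.
have Pg : 0 <= Pr^-1 by rewrite invr_ge0.
have P1g : 0 <= (1 - Pr)^-1 by rewrite invr_ge0 subr_ge0.
exists (fun i : bool => if i then Pr else 1 - Pr),
  (fun i : bool => if i then
     mk4 ((Pr - S1 - S2 + t) / Pr) ((S2 - t) / Pr) ((S1 - t) / Pr) (t / Pr)
   else mk4 ((q (false,false) - (Pr - S1 - S2 + t)) / (1 - Pr))
            ((q (false,true) - (S2 - t)) / (1 - Pr))
            ((q (true,false) - (S1 - t)) / (1 - Pr))
            ((q (true,true) - t) / (1 - Pr))).
split.
- by apply: is_prob_bool; rewrite hP0 hP1.
- case.
  + apply: is_prob_mk4; rewrite ?mulr_ge0 //; try lra.
    by field.
  + apply: is_prob_mk4; rewrite ?mulr_ge0 //; try lra.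
    rewrite -!mulrDl -[X in X / _](_ : 1 - Pr = _) ?divff //; lra.
- move=> j; rewrite /mu big_bool /=; case: j => [[] []] /=; field; by rewrite ?Pn ?P1n.
- rewrite /chi1 /chi2 /=; rewrite lerD2l; apply: ler_wpM2r => //; lra.
- congr (_, _, _); rewrite /chi1 /chi2 /S1 /S2 /=; field; by rewrite ?Pn.
Qed.
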